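(* Suppose $\mathbf{X}=\mathbf{D}_1\boldsymbol{\Gamma}_1$, $\boldsymbol{\Gamma}_{i-1}=\mathbf{D}_i\boldsymbol{\Gamma}_i$ for $2\le i\le K$, all $\boldsymbol{\Gamma}_i\ne0$, and $\mathbf{Y}=\mathbf{X}+\mathbf{E}$ with $\|\mathbf{E}\|_{2,\infty}^{p}\le\epsilon_0$. Let $|\Gamma_i^{\min}|,|\Gamma_i^{\max}|$ be the smallest and largest absolute values of the nonzero entries of $\boldsymbol{\Gamma}_i$. Let $\hat{\boldsymbol{\Gamma}}_0=\mathbf{Y}$ and $\hat{\boldsymbol{\Gamma}}_i=\mathcal{H}_{\beta_i}(\mathbf{D}_i^T\hat{\boldsymbol{\Gamma}}_{i-1})$ for $1\le i\le K$ (layered hard thresholding). Define recursively $$\epsilon_i=\sqrt{\|\boldsymbol{\Gamma}_i\|_{0,\infty}^{p}}\,\big(\epsilon_{i-1}+\mu(\mathbf{D}_i)(\|\boldsymbol{\Gamma}_i\|_{0,\infty}^{s}-1)|\Gamma_i^{\max}|\big).$$ Assume that for all $1\le i\le K$: (a) $\|\boldsymbol{\Gamma}_i\|_{0,\infty}^{s}<\tfrac12\Big(1+\tfrac{1}{\mu(\mathbf{D}_i)}\tfrac{|\Gamma_i^{\min}|}{|\Gamma_i^{\max}|}\Big)-\tfrac{1}{\mu(\mathbf{D}_i)}\tfrac{\epsilon_{i-1}}{|\Gamma_i^{\max}|}$; and (b) $|\Gamma_i^{\min}|-(\|\boldsymbol{\Gamma}_i\|_{0,\infty}^{s}-1)\mu(\mathbf{D}_i)|\Gamma_i^{\max}|-\epsilon_{i-1}>\beta_i>\|\boldsymbol{\Gamma}_i\|_{0,\infty}^{s}\mu(\mathbf{D}_i)|\Gamma_i^{\max}|+\epsilon_{i-1}$.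 Then for all $1\le i\le K$: (1) the support of $\hat{\boldsymbol{\Gamma}}_i$ equals that of $\boldsymbol{\Gamma}_i$; and (2) $\|\boldsymbol{\Gamma}_i-\hat{\boldsymbol{\Gamma}}_i\|_{2,\infty}^{p}\le\epsilon_i$.
   Context: Setting. Signals are one-dimensional of length $N$ with periodic boundary conditions; $m_0=1$, $\boldsymbol{\Gamma}_0=\mathbf{X}$. For $i\ge1$, $\boldsymbol{\Gamma}_i\in\mathbb{R}^{Nm_i}$ has entry $km_i+r$ equal to the coefficient of filter $r$ at spatial shift $k$. $\mathbf{D}_i\in\mathbb{R}^{Nm_{i-1}\times Nm_i}$ is a (stride) convolutional dictionary whose column $km_i+r$ is local filter $r$ (length $n_{i-1}m_{i-1}$) placed cyclically on entries $km_{i-1},\dots,km_{i-1}+n_{i-1}m_{i-1}-1$, zero elsewhere. Columns have unit $\ell_2$ norm; $\mu(\mathbf{D})=\max_{i\neq j}|\mathbf{d}_i^T\mathbf{d}_j|$. Stripes: $\mathbf{S}_{i,j}\boldsymbol{\Gamma}_i$ is the subvector of $\boldsymbol{\Gamma}_i$ at spatial shifts $k\in\{j-n_{i-1}+1,\dots,j+n_{i-1}-1\}$ (mod $N$), all channels; $\|\boldsymbol{\Gamma}_i\|_{0,\infty}^{s}=\max_j\|\mathbf{S}_{i,j}\boldsymbol{\Gamma}_i\|_0$. Patches: for $i\ge0$, $\mathbf{P}_{i,j}\mathbf{V}$ extracts from $\mathbf{V}\in\mathbb{R}^{Nm_i}$ the cyclically contiguous subvector at spatial shifts $j,\dots,j+n_i-1$,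 all channels (length $n_im_i$); $\|\mathbf{V}\|_{2,\infty}^{p}=\max_j\|\mathbf{P}_{i,j}\mathbf{V}\|_2$, $\|\mathbf{V}\|_{0,\infty}^{p}=\max_j\|\mathbf{P}_{i,j}\mathbf{V}\|_0$. For the last layer $\boldsymbol{\Gamma}_K$, the patch size $n_K$ is an arbitrary fixed choice. Hard thresholding: $\mathcal{H}_\beta$ acts entrywise, $\mathcal{H}_\beta(z)=z$ if $|z|>\beta$ and $0$ otherwise. *)

(* Defs.v *)
(* R is an arbitrary real closed field (rcfType), which
   covers the real numbers; only algebraic operations (incl. sqrt) are used. *)
From HB Require Import structures.
From mathcomp Require Import all_boot all_order all_algebra.
Set Implicit Arguments. Unset Strict Implicit. Unset Printing Implicit Defensive.
Import Order.TTheory GRing.Theory Num.Theory.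
Local Open Scope ring_scope.

Definition HT (R : numDomainType) (b : R) (p : nat) (v : 'cV[R]_p) : 'cV[R]_p :=
  map_mx (fun z => if b < `|z| then z else 0) v.

(* Entry (a, c) of a (stride) convolutional dictionary of size
   N*mp x N*mc, built from local filters f r (length np*mp):
   column c = k*mc + r is filter r placed cyclically on rows
   k*mp, ..., k*mp + np*mp - 1 (mod N*mp), zero elsewhere. *)
Definition conv_entry (R : numDomainType) (N mp np mc : nat)
  (f : nat -> nat -> R) (a c : nat) : R :=
  let k := (c %/ mc)%N in
  let r := (c %% mc)%N in
  let t := ((a + N * mp - (k * mp) %% (N * mp)) %% (N * mp))%N in
  if (t < np * mp)%N then f r t else 0.

Definition is_conv_dict (R : numDomainType) (N mp np mc : nat)
  (D : 'M[R]_(N * mp, N * mc)) : Prop :=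
  exists f : nat -> nat -> R, forall a c, D a c = conv_entry N mp np mc f a c.

Definition unit_cols (R : numDomainType) (p q : nat) (D : 'M[R]_(p, q)) : Prop :=
  forall c : 'I_q, \sum_(a < p) D a c ^+ 2 = 1.

Definition mutual_coherence (R : realDomainType) (p q : nat) (D : 'M[R]_(p, q)) : R :=
  \big[Num.max/0]_(a < q) \big[Num.max/0]_(b < q | b != a)
     `| \sum_(r < p) D r a * D r b |.

(* spatial shift k lies in stripe j: k in {j-np+1, ..., j+np-1} (mod N) *)
Definition in_stripe (N np j k : nat) : bool :=
  [exists d : 'I_((2 * np).-1), ((k + np.-1) %% N == (j + d) %% N)%N].

(* ||G||_{0,inf}^s  (np = n_{i-1}, mc = m_i) *)
Definition stripe_l0 (R : numDomainType) (N np mc : nat) (G : 'cV[R]_(N * mc)) : nat :=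
  \max_(j < N) #|[set c : 'I_(N * mc) | (G c ord0 != 0%R) && in_stripe N np j (c %/ mc)]|.

(* index c (= k*mc + r) belongs to patch j: k in {j, ..., j+nc-1} (mod N) *)
Definition in_patch (N nc mc j c : nat) : bool :=
  [exists s : 'I_nc, (c %/ mc == (j + s) %% N)%N].

Definition patch_l0 (R : numDomainType) (N nc mc : nat) (G : 'cV[R]_(N * mc)) : nat :=
  \max_(j < N) #|[set c : 'I_(N * mc) | (G c ord0 != 0%R) && in_patch N nc mc j c]|.

Definition patch_l2 (R : rcfType) (N nc mc : nat) (G : 'cV[R]_(N * mc)) : R :=
  \big[Num.max/0]_(j < N)
     Num.sqrt (\sum_(c < N * mc | in_patch N nc mc j c) G c ord0 ^+ 2).

Definition gmax (R : realDomainType) (p : nat) (G : 'cV[R]_p) : R :=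
  \big[Num.max/0]_(c < p) `|G c ord0|.
Definition gmin (R : realDomainType) (p : nat) (G : 'cV[R]_p) : R :=
  \big[Num.min/gmax G]_(c < p | G c ord0 != 0%R) `|G c ord0|.

Definition supp (R : numDomainType) (p : nat) (G : 'cV[R]_p) : {set 'I_p} :=
  [set c | G c ord0 != 0].

Arguments is_conv_dict {R} N mp np mc D.
Arguments stripe_l0 {R} N np mc G.
Arguments patch_l0 {R} N nc mc G.
Arguments patch_l2 {R} N nc mc G.

(* Main.v *)
Require Import Defs.
From HB Require Import structures.
From mathcomp Require Import all_boot all_order all_algebra zify ring lra.
Import Order.TTheory GRing.Theory Num.Theory.
Local Open Scope ring_scope.

Lemma modl (x mp t0 N : nat) : (t0 < mp)%N -> ((x*mp + t0) %% (N*mp) = (x %% N)*mp + t0)%N.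
Proof.
move=> h; case: N => [|N]; first by rewrite !modn0.
rewrite {1}(divn_eq x N.+1) mulnDl -mulnA -addnA modnMDl modn_small //.
have : (x %% N.+1 < N.+1)%N by rewrite ltn_mod.
nia.
Qed.

Lemma conv_nz (R : numDomainType) (N mp np mc : nat) (f : nat -> nat -> R) (a c : nat) :
  (a < N*mp)%N -> (c %/ mc < N)%N -> conv_entry N mp np mc f a c != 0 ->
  exists2 u, (u < np)%N & (a %/ mp = (c %/ mc + u) %% N)%N.
Proof.
rewrite /conv_entry => ha hk.
set k := (c %/ mc)%N in hk *.
have mp0 : (0 < mp)%N by case: mp ha => //; rewrite muln0.
have hkm : ((k * mp) %% (N * mp) = k * mp)%N by rewrite modn_small // ltn_pmul2r.
rewrite hkm.
set t := (((a + N * mp - k * mp) %% (N * mp)))%N.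
case: ifP => [ht _|]; last by rewrite eqxx.
exists (t %/ mp)%N; first by rewrite ltn_divLR.
have e1 : ((t + k*mp) %% (N*mp) = a)%N.
  have hl : (k*mp < N*mp)%N by rewrite ltn_pmul2r.
  rewrite /t modnDml subnK; last by lia.
  by rewrite modnDr modn_small.
have e2 : (t + k*mp = (t %/ mp + k) * mp + t %% mp)%N.
  by rewrite {1}(divn_eq t mp) mulnDl; lia.
have hm : (t %% mp < mp)%N by rewrite ltn_mod.
by rewrite -e1 e2 modl // divnMDl // (divn_small hm) addn0 addnC.
Qed.

Arguments conv_nz {R N mp np mc f a c}.

Lemma stripe_ov (N np k k' u u' : nat) : (u < np)%N -> (u' < np)%N ->
  ((k + u) %% N = (k' + u') %% N)%N -> in_stripe N np k k'.
Proof.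
move=> hu hu' he; apply/existsP.
have hd : ((np.-1 + u - u') < (2*np).-1)%N by lia.
exists (Ordinal hd) => /=.
have -> : (k + (np.-1 + u - u') = (k + u) + (np.-1 - u'))%N by lia.
apply/eqP; rewrite -(modnDml (k + u)) he modnDml; congr (_ %% _)%N; lia.
Qed.

Arguments stripe_ov {N np k k' u u'}.
Lemma cs1 (R : rcfType) (I : finType) (P : pred I) (x y : I -> R) :
  \sum_(i | P i) x i ^+ 2 = 1 ->
  (\sum_(i | P i) x i * y i) ^+ 2 <= \sum_(i | P i) y i ^+ 2.
Proof.
move=> hx; set l := \sum_(i | P i) x i * y i.
have h0 : 0 <= \sum_(i | P i) (y i - l * x i) ^+ 2 by apply: sumr_ge0 => i _; exact: sqr_ge0.
have e : \sum_(i | P i) (y i - l * x i) ^+ 2 =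
   \sum_(i | P i) y i ^+ 2 - (l * 2) * l + l ^+ 2 * \sum_(i | P i) x i ^+ 2.
  rewrite /l mulr_sumr mulr_sumr -!sumrN -!big_split /=.
  by apply: eq_bigr => i _; rewrite -/l; ring.
rewrite e hx in h0; lra.
Qed.

Lemma entry_decomp (R : rcfType) N mp mc (D : 'M[R]_(N*mp, N*mc)) (G : 'cV[R]_(N*mc))
   (Gh : 'cV[R]_(N*mp)) c :
  unit_cols D ->
  (D^T *m Gh) c ord0 = G c ord0
     + \sum_(c' | c' != c) (\sum_a D a c * D a c') * G c' ord0
     + \sum_a D a c * (Gh - D *m G) a ord0.
Proof.
move=> hu.
rewrite -{1}(subrK (D *m G) Gh) mulmxDr addrC mulmxA !mxE.
rewrite (bigD1 c) //= mxE.
have -> : \sum_j D^T c j * D j c = 1.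
  rewrite -(hu c); apply: eq_bigr => a _; rewrite mxE; ring.
rewrite mul1r; congr (_ + _ + _).
  apply: eq_bigr => c' _; rewrite mxE; congr (_ * _); apply: eq_bigr => a _; by rewrite mxE.
by apply: eq_bigr => a _; rewrite mxE.
Qed.

Lemma divlt (c N mc : nat) : (c < N * mc)%N -> (c %/ mc < N)%N.
Proof. case: mc => [|mc]; first by rewrite muln0. by rewrite ltn_divLR. Qed.
Arguments divlt {c N mc}.

Lemma ov_zero (R : rcfType) N mp np mc (D : 'M[R]_(N*mp, N*mc)) (c c' : 'I_(N*mc)) :
  is_conv_dict N mp np mc D -> ~~ in_stripe N np (c %/ mc) (c' %/ mc) ->
  \sum_a D a c * D a c' = 0.
Proof.
case=> f hf hn; apply: big1 => a _.
have [h1|h1] := eqVneq (D a c) 0; first by rewrite h1 mul0r.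
have [h2|h2] := eqVneq (D a c') 0; first by rewrite h2 mulr0.
move: h1 h2; rewrite !hf => h1 h2.
have [u hu e1] := conv_nz (ltn_ord a) (divlt (ltn_ord c)) h1.
have [u' hu' e2] := conv_nz (ltn_ord a) (divlt (ltn_ord c')) h2.
by rewrite (stripe_ov hu hu') ?e1 // -e1 e2 in hn.
Qed.

Lemma in_stripe_self N np k : (0 < np)%N -> in_stripe N np k k.
Proof. move=> h; exact: (@stripe_ov N np k k 0 0). Qed.

Lemma err_bound (R : rcfType) N mp np mc (D : 'M[R]_(N*mp, N*mc)) (E : 'cV[R]_(N*mp)) c :
  is_conv_dict N mp np mc D -> unit_cols D ->
  `|\sum_a D a c * E a ord0| <= patch_l2 N np mp E.
Proof.
case=> f hf hu; have hk := divlt (ltn_ord c).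
set S := in_patch N np mp (c %/ mc).
have hz : forall a : 'I_(N*mp), ~~ S a -> D a c = 0.
  move=> a; apply: contraNeq; rewrite hf => h.
  have [u hu' e1] := conv_nz (ltn_ord a) hk h.
  by apply/existsP; exists (Ordinal hu'); rewrite /= e1.
have e1 : \sum_a D a c * E a ord0 = \sum_(a < N * mp | S a) D a c * E a ord0.
  rewrite [RHS]big_mkcond; apply: eq_bigr => a _; case: ifP => // h.
  by rewrite hz ?h // mul0r.
have e2 : \sum_(a < N * mp | S a) D a c ^+ 2 = 1.
  rewrite -(hu c) big_mkcond; apply: eq_bigr => a _; case: ifP => // h.
  by rewrite hz ?h // expr0n.
rewrite e1 -sqrtr_sqr; apply: le_trans (ler_wsqrtr (@cs1 _ _ _ _ (fun a => E a ord0) e2)) _.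
exact: (le_bigmax 0 (fun j : 'I_N => Num.sqrt (\sum_(c0 < N * mp | in_patch N np mp j c0) E c0 ord0 ^+ 2)) (Ordinal hk)).
Qed.

Lemma coh_bound (R : rcfType) p q (D : 'M[R]_(p, q)) (c c' : 'I_q) :
  c' != c -> `|\sum_r D r c * D r c'| <= mutual_coherence D.
Proof.
move=> h; rewrite /mutual_coherence.
apply: le_trans (le_bigmax 0 (fun a : 'I_q => \big[Num.max/0]_(b < q | b != a) `|\sum_(r < p) D r a * D r b|) c).
exact: (le_bigmax_cond 0 (fun b : 'I_q => `|\sum_(r < p) D r c * D r b|) h).
Qed.

Lemma coh_ge0 (R : rcfType) p q (D : 'M[R]_(p, q)) : 0 <= mutual_coherence D.
Proof. exact: bigmax_ge_id. Qed.

Lemma gmax_bound (R : rcfType) p (G : 'cV[R]_p) c : `|G c ord0| <= gmax G.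
Proof. exact: (le_bigmax 0 (fun c : 'I_p => `|G c ord0|) c). Qed.

Lemma gmax_ge0 (R : rcfType) p (G : 'cV[R]_p) : 0 <= gmax G.
Proof. exact: bigmax_ge_id. Qed.

Lemma gmin_bound (R : rcfType) p (G : 'cV[R]_p) c : G c ord0 != 0 -> gmin G <= `|G c ord0|.
Proof. move=> h; exact: (bigmin_le_cond (gmax G) (fun c : 'I_p => `|G c ord0|) h). Qed.

Lemma entry_bound (R : rcfType) N mp np mc (D : 'M[R]_(N*mp, N*mc)) (G : 'cV[R]_(N*mc))
   (Gh : 'cV[R]_(N*mp)) c :
  is_conv_dict N mp np mc D -> unit_cols D ->
  `|(D^T *m Gh) c ord0 - G c ord0| <=
    (#|[set c' | (G c' ord0 != 0) && in_stripe N np (c %/ mc) (c' %/ mc)] :\ c|)%:R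
       * (mutual_coherence D * gmax G) + patch_l2 N np mp (Gh - D *m G).
Proof.
move=> hd hu; rewrite (@entry_decomp _ _ _ _ D G) //.
set B := \sum_(c' | c' != c) _.
set er := \sum_a _.
have -> : G c ord0 + B + er - G c ord0 = B + er by ring.
apply: le_trans (ler_normD _ _) _; apply: lerD; last exact: err_bound.
apply: le_trans (ler_norm_sum _ _ _) _.
have K0 : 0 <= mutual_coherence D * gmax G by rewrite mulr_ge0 ?coh_ge0 ?gmax_ge0.
rewrite mulr_natl -sumr_const big_mkcond [X in _ <= X]big_mkcond /=; apply: ler_sum => c' _.
rewrite in_setD1 in_set.
have [->|hne] := eqVneq c' c; first by [].
rewrite /=.
have [hG|hG] := eqVneq (G c' ord0) 0; first by rewrite hG mulr0 normr0.
rewrite /=; case: ifP => hs.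
  by rewrite normrM; apply: ler_pM => //; [exact: coh_bound | exact: gmax_bound].
by rewrite (@ov_zero _ _ _ _ _ D c c' hd) ?hs // mul0r normr0.
Qed.

Lemma card_S (R : rcfType) N (np : nat) mc (G : 'cV[R]_(N*mc)) (c : 'I_(N*mc)) :
  (#|[set c' | (G c' ord0 != 0%R) && in_stripe N np (c %/ mc) (c' %/ mc)]|
     <= stripe_l0 N np mc G)%N.
Proof.
rewrite /stripe_l0.
exact: (leq_bigmax (F := fun j : 'I_N => #|[set c0 : 'I_(N*mc) | (G c0 ord0 != 0) && in_stripe N np j (c0 %/ mc)]|) (Ordinal (divlt (ltn_ord c)))).
Qed.

Lemma entry_nz (R : rcfType) N mp np mc (D : 'M[R]_(N*mp, N*mc)) (G : 'cV[R]_(N*mc))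
   (Gh : 'cV[R]_(N*mp)) c :
  (0 < np)%N -> is_conv_dict N mp np mc D -> unit_cols D -> G c ord0 != 0 ->
  `|(D^T *m Gh) c ord0 - G c ord0| <=
    ((stripe_l0 N np mc G)%:R - 1) * (mutual_coherence D * gmax G) + patch_l2 N np mp (Gh - D *m G).
Proof.
move=> hnp hd hu hG; apply: le_trans (@entry_bound _ _ _ _ _ D G Gh c hd hu) _.
apply: lerD => //; apply: ler_wpM2r; first by rewrite mulr_ge0 ?coh_ge0 ?gmax_ge0.
set S := [set c' | _].
have hc : c \in S by rewrite inE hG in_stripe_self.
have := @card_S _ _ np _ G c; rewrite -/S (cardsD1 c S) hc add1n => h.
rewrite lerBrDr -(natrD _ _ 1%N) ler_nat addn1; exact: h.
Qed.

Lemma entry_z (R : rcfType) N mp np mc (D : 'M[R]_(N*mp, N*mc)) (G : 'cV[R]_(N*mc))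
   (Gh : 'cV[R]_(N*mp)) c :
  is_conv_dict N mp np mc D -> unit_cols D -> G c ord0 = 0 ->
  `|(D^T *m Gh) c ord0| <=
    (stripe_l0 N np mc G)%:R * (mutual_coherence D * gmax G) + patch_l2 N np mp (Gh - D *m G).
Proof.
move=> hd hu hG; have := @entry_bound _ _ _ _ _ D G Gh c hd hu; rewrite hG subr0 => h.
apply: le_trans h _; apply: lerD => //; apply: ler_wpM2r; first by rewrite mulr_ge0 ?coh_ge0 ?gmax_ge0.
rewrite ler_nat; apply: leq_trans (@card_S _ _ np _ G c); exact: subset_leq_card (subsetDl _ _).
Qed.

Lemma patch_l2_ge0 (R : rcfType) N nc mc (G : 'cV[R]_(N * mc)) : 0 <= patch_l2 N nc mc G.
Proof. exact: bigmax_ge_id. Qed.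

Lemma layer (R : rcfType) (N mp np mc nc : nat) (D : 'M[R]_(N*mp, N*mc))
  (G : 'cV[R]_(N*mc)) (Gh : 'cV[R]_(N*mp)) (beta e : R) :
  (0 < np)%N -> is_conv_dict N mp np mc D -> unit_cols D -> G != 0 ->
  patch_l2 N np mp (Gh - D *m G) <= e ->
  gmin G - ((stripe_l0 N np mc G)%:R - 1) * mutual_coherence D * gmax G - e > beta ->
  beta > (stripe_l0 N np mc G)%:R * mutual_coherence D * gmax G + e ->
  supp (HT beta (D^T *m Gh)) = supp G /\
  patch_l2 N nc mc (G - HT beta (D^T *m Gh))
    <= Num.sqrt ((patch_l0 N nc mc G)%:R)
       * (e + mutual_coherence D * ((stripe_l0 N np mc G)%:R - 1) * gmax G).
Proof.
move=> hnp hd hu hG0 he hb1 hb2.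
set s := stripe_l0 N np mc G in hb1 hb2 *.
set mu := mutual_coherence D in hb1 hb2 *.
set gm := gmax G in hb1 hb2 *.
set v := D^T *m Gh.
have e0 : 0 <= e := le_trans (patch_l2_ge0 _ _ _ _ _) he.
have mu0 : 0 <= mu := coh_ge0 _ _ _ D.
have gm0 : 0 <= gm := gmax_ge0 _ _ G.
have s0 : 0 <= s%:R :> R by [].
have b0 : 0 <= beta.
  apply: le_trans (ltW hb2); rewrite addr_ge0 // !mulr_ge0 //.
have Hnz : forall c, G c ord0 != 0 -> `|v c ord0 - G c ord0| <= (s%:R - 1) * (mu * gm) + e.
  move=> c hc; apply: le_trans (@entry_nz _ _ _ _ _ D G Gh c hnp hd hu hc) _; exact: lerD.
have Hz : forall c, G c ord0 = 0 -> `|v c ord0| <= s%:R * (mu * gm) + e.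
  move=> c hc; apply: le_trans (@entry_z _ _ _ _ _ D G Gh c hd hu hc) _; exact: lerD.
have HT1 : forall c, HT beta v c ord0 = if G c ord0 != 0 then v c ord0 else 0.
  move=> c; rewrite /HT mxE.
  have [hc|hc] := eqVneq (G c ord0) 0.
    have := Hz c hc; case: ifP => // h1 h2; lra.
  have h1 := Hnz c hc; have h2 := @gmin_bound _ _ G c hc.
  have h3 : `|G c ord0| <= `|v c ord0| + `|v c ord0 - G c ord0|.
    by rewrite distrC; apply: le_trans (ler_normD _ _); rewrite addrC subrK.
  have -> : beta < `|v c ord0| by lra.
  by [].
have Hsupp : supp (HT beta v) = supp G.
  apply/setP => c; rewrite !inE HT1; case: ifP => hc; last by rewrite eqxx.
  have h1 := Hnz c hc; have h2 := @gmin_bound _ _ G c hc.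
  have h3 : `|G c ord0| <= `|v c ord0| + `|v c ord0 - G c ord0|.
    by rewrite distrC; apply: le_trans (ler_normD _ _); rewrite addrC subrK.
  rewrite -normr_gt0; lra.
split => //.
set b := e + mu * (s%:R - 1) * gm.
have Herr : forall c, G c ord0 != 0 -> `|(G - HT beta v) c ord0| <= b.
  move=> c hc; rewrite 2!mxE HT1 hc distrC; have := Hnz c hc; rewrite /b; lra.
have bnn : 0 <= b.
  have [c hc] : exists c, G c ord0 != 0.
    apply/existsP; move: hG0; apply: contraNT; rewrite negb_exists => /forallP h.
    by apply/eqP/matrixP => i j; rewrite (ord1 j) mxE; apply/eqP; rewrite -[_ == _]negbK h.
  exact: le_trans (normr_ge0 _) (Herr c hc).
rewrite /patch_l2; apply: bigmax_le => [|j _]; first by rewrite mulr_ge0 ?sqrtr_ge0.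
set A := [set c | (G c ord0 != 0) && in_patch N nc mc j c].
have hA : (#|A| <= patch_l0 N nc mc G)%N.
  exact: (leq_bigmax (F := fun j : 'I_N => #|[set c : 'I_(N*mc) | (G c ord0 != 0) && in_patch N nc mc j c]|) j).
rewrite -(ger0_norm bnn) -sqrtr_sqr -sqrtrM //; apply: ler_wsqrtr.
apply: le_trans (_ : \sum_(c < N * mc | in_patch N nc mc j c) (if G c ord0 != 0 then b ^+ 2 else 0) <= _).
  apply: ler_sum => c _; case: ifP => hc.
    have := Herr c hc; rewrite ler_norml => /andP [h1 h2]; nra.
  move/negbFE/eqP: hc => hc.
  by rewrite 2!mxE HT1 hc eqxx subr0 expr0n.
have -> : \sum_(c < N * mc | in_patch N nc mc j c) (if G c ord0 != 0 then b ^+ 2 else 0)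
    = \sum_(c in A) b ^+ 2.
  rewrite big_mkcond [RHS]big_mkcond; apply: eq_bigr => c _; rewrite inE.
  by case: (in_patch _ _ _ _ _); case: (G c ord0 != 0).
rewrite sumr_const -[b ^+ 2 *+ _]mulr_natl; apply: ler_wpM2r; first exact: sqr_ge0.
by rewrite ler_nat.
Qed.

Lemma patch_l2_opp (R : rcfType) N nc mc (A B : 'cV[R]_(N * mc)) :
  patch_l2 N nc mc (A - B) = patch_l2 N nc mc (B - A).
Proof.
rewrite /patch_l2; apply: eq_bigr => j _; congr Num.sqrt; apply: eq_bigr => c _.
by rewrite !mxE -opprB sqrrN.
Qed.

Theorem theorem3 (R : rcfType) (N K : nat) (m n : nat -> nat)
  (D : forall i : nat, 'M[R]_(N * m i.-1, N * m i))
  (Gamma : forall i : nat, 'cV[R]_(N * m i))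
  (E : 'cV[R]_(N * m 0%N))
  (Ghat : forall i : nat, 'cV[R]_(N * m i))
  (beta eps : nat -> R) (eps0 : R) :
  m 0%N = 1%N ->
  (forall i, (i <= K)%N -> (0 < n i <= N)%N) ->
  (forall i, (1 <= i <= K)%N ->
     is_conv_dict N (m i.-1) (n i.-1) (m i) (D i) /\ unit_cols (D i)) ->
  (forall i, (1 <= i <= K)%N -> Gamma i.-1 = D i *m Gamma i) ->
  (forall i, (1 <= i <= K)%N -> Gamma i != 0) ->
  patch_l2 N (n 0%N) (m 0%N) E <= eps0 ->
  Ghat 0%N = Gamma 0%N + E ->
  (forall i, (1 <= i <= K)%N -> Ghat i = HT (beta i) ((D i)^T *m Ghat i.-1)) ->
  eps 0%N = eps0 ->
  (forall i, (1 <= i <= K)%N ->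
     eps i = Num.sqrt ((patch_l0 N (n i) (m i) (Gamma i))%:R)
             * (eps i.-1 + mutual_coherence (D i)
                  * ((stripe_l0 N (n i.-1) (m i) (Gamma i))%:R - 1)
                  * gmax (Gamma i))) ->
  (forall i, (1 <= i <= K)%N ->
     (stripe_l0 N (n i.-1) (m i) (Gamma i))%:R
       < 2^-1 * (1 + (mutual_coherence (D i))^-1 * (gmin (Gamma i) / gmax (Gamma i)))
         - (mutual_coherence (D i))^-1 * (eps i.-1 / gmax (Gamma i))) ->
  (forall i, (1 <= i <= K)%N ->
     gmin (Gamma i)
       - ((stripe_l0 N (n i.-1) (m i) (Gamma i))%:R - 1)
         * mutual_coherence (D i) * gmax (Gamma i) - eps i.-1 > beta i
     /\ beta i > (stripe_l0 N (n i.-1) (m i) (Gamma i))%:R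
                 * mutual_coherence (D i) * gmax (Gamma i) + eps i.-1) ->
  forall i, (1 <= i <= K)%N ->
    supp (Ghat i) = supp (Gamma i)
    /\ patch_l2 N (n i) (m i) (Gamma i - Ghat i) <= eps i.
Proof.
move=> hm0 hn hD hrec hG0 hE hGh0 hGh heps0 heps _ hb.
have key : forall i, (i <= K)%N ->
    patch_l2 N (n i) (m i) (Ghat i - Gamma i) <= eps i /\
    ((1 <= i)%N -> supp (Ghat i) = supp (Gamma i)
                   /\ patch_l2 N (n i) (m i) (Gamma i - Ghat i) <= eps i).
  elim => [|i IH] hi.
    by rewrite hGh0 heps0 addrC addKr; split.
  have hi' : (1 <= i.+1 <= K)%N by rewrite hi.
  have [P _] := IH (ltnW hi).
  have hnp : (0 < n i)%N by case/andP: (hn i (ltnW hi)).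
  have [hd hu] := hD _ hi'.
  have [hb1 hb2] := hb _ hi'.
  have hP : patch_l2 N (n i) (m i) (Ghat i - D i.+1 *m Gamma i.+1) <= eps i.
    by rewrite -(hrec _ hi').
  have [hs hl] := @layer R N (m i) (n i) (m i.+1) (n i.+1) (D i.+1) (Gamma i.+1) (Ghat i)
     (beta i.+1) (eps i) hnp hd hu (hG0 _ hi') hP hb1 hb2.
  rewrite (hGh _ hi') (heps _ hi') /=.
  by split; [rewrite patch_l2_opp | move=> _; split].
move=> i /andP [h1 h2]; exact: (key i h2).2 h1.
Qed.
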